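(* Let $G=(V,E)$ be a finite simple graph with no isolated vertices and no isolated edges, whose vertices operate independently, vertex $v$ with probability $p_v$, and let $q_v=1-p_v$, $\mathbf{p}=(p_v)_{v\in V}$. Let $A$ be any set of vertices of $G$ each of which is adjacent to a vertex of degree $1$. Then \[ \operatorname{DRel}(G,\mathbf{p})=\sum_{J\subseteq V\setminus A}(-1)^{|J|}\prod_{v\in N_G[J]}q_v. \]
   Context: $\operatorname{DRel}(G,\mathbf{p})$ is the probability that the set of operating vertices is a dominating set of $G$ (every vertex not in the set is adjacent to a vertex in it); edges never fail. $N_G[J]$ is the closed neighbourhood of $J$ (vertices in $J$ or adjacent to a vertex of $J$). An isolated edge is an edge both of whose endpoints have degree $1$. *)

(* Defs.v *)
(* A finite simple graph on a finType T is given by an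
   adjacency relation e : rel T which is symmetric and irreflexive. *)
From mathcomp Require Import all_boot all_order all_algebra.
Set Implicit Arguments. Unset Strict Implicit. Unset Printing Implicit Defensive.
Import Order.TTheory GRing.Theory Num.Theory.
Local Open Scope ring_scope.

Section Graph.
Variable T : finType.
Variable e : rel T.

Definition nbhd (v : T) : {set T} := [set u | e v u].
Definition deg (v : T) : nat := #|nbhd v|.

Definition closed_nbhd (J : {set T}) : {set T} :=
  [set u | (u \in J) || [exists w in J, e w u]].

Definition dominating (S : {set T}) : bool :=
  [forall v, (v \notin S) ==> [exists w in S, e v w]].

Definition DRel (R : numDomainType) (p : T -> R) : R :=
  \sum_(S : {set T} | dominating S)
     (\prod_(v in S) p v) * (\prod_(v in ~: S) (1 - p v)).
End Graph.

(* Main.v *)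
Require Import Defs.
From mathcomp Require Import all_boot all_order all_algebra.
From mathcomp Require Import lra.
Import Order.TTheory GRing.Theory Num.Theory.
Set Implicit Arguments. Unset Strict Implicit.
Local Open Scope ring_scope.
Section P1.
Variables (R : realFieldType) (T : finType) (e : rel T) (p : T -> R).

Lemma disjP (A B : {set T}) : reflect (forall x, x \in A -> x \in B -> False) [disjoint A & B].
Proof.
rewrite disjoints_subset; apply: (iffP subsetP) => H x.
  by move=> /H; rewrite inE => /negP.
by move=> xA; rewrite inE; apply/negP; apply: H.
Qed.

Definition wt (S : {set T}) : R :=
  (\prod_(v in S) p v) * (\prod_(v in ~: S) (1 - p v)).

Lemma wtE S : wt S = \prod_v (if v \in S then p v else 1 - p v).
Proof.
rewrite /wt [RHS](bigID (mem S)) /=; congr (_ * _).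
  by apply: eq_bigr => i ->.
by rewrite [RHS](eq_bigl (fun v => v \in ~: S)) => [|v]; [apply: eq_bigr => i; rewrite inE => /negbTE ->| rewrite inE].
Qed.

Lemma L1 (X : {set T}) :
  \prod_(v in X) (1 - p v) = \sum_(S : {set T} | [disjoint S & X]) wt S.
Proof.
transitivity (\prod_v ((if v \in X then 0 else p v) + (1 - p v))).
  rewrite [RHS](bigID (mem X)) /=.
  rewrite [X in _ = _ * X]big1 ?mulr1; last by move=> i /negbTE ->; rewrite addrC subrK.
  by apply: eq_bigr => i ->; rewrite add0r.
rewrite bigA_distr [RHS]big_mkcond /=; apply: eq_big => // S _.
case: (boolP [disjoint S & X]) => hd.
  rewrite wtE; apply: eq_bigr => v _; case: ifP => // vS.
  by rewrite (disjointFr hd vS).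
have [v /andP [vS vX]] : exists v, (v \in S) && (v \in X).
  by apply/existsP; move: hd; apply: contraR; rewrite negb_exists => /forallP H; apply/disjP => x xS xX; move: (H x); rewrite xS xX.
by rewrite (bigD1 v) //= vS vX mul0r.
Qed.

Lemma L2 (U : {set T}) :
  \sum_(J : {set T} | J \subset U) (-1) ^+ #|J| = (U == set0)%:R :> R.
Proof.
transitivity (\prod_v ((if v \in U then -1 else 0) + 1) : R).
  rewrite bigA_distr [LHS]big_mkcond /=; apply: eq_big => // J _.
  case: (boolP (J \subset U)) => hJ.
    rewrite (bigID (mem J)) /= [X in _ = _ * X]big1 ?mulr1; last by move=> i /negbTE ->.
    rewrite -prodr_const; apply: eq_bigr => i iJ; by rewrite iJ (subsetP hJ).
  have [v /andP [vJ vU]] : exists v, (v \in J) && (v \notin U).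
    by apply/existsP; move: hJ; apply: contraR; rewrite negb_exists => /forallP H; apply/subsetP => x xJ; move: (H x); rewrite xJ /= negbK.
  by rewrite (bigD1 v) //= vJ (negbTE vU) mul0r.
case: (set_0Vmem U) => [->|[u uU]].
  by rewrite eqxx big1 // => i _; rewrite inE add0r.
have /negbTE -> : U != set0 by apply/set0Pn; exists u.
by rewrite (bigD1 u) //= uU addNr mul0r.
Qed.

Definition undom (S : {set T}) : {set T} :=
  [set v | [disjoint closed_nbhd e [set v] & S]].

Lemma undomP (S J : {set T}) : (J \subset undom S) = [disjoint closed_nbhd e J & S].
Proof.
apply/subsetP/disjP.
  move=> H x; rewrite inE => /orP [xJ|/existsP [w /andP [wJ ewx]]] xS.
    by move: (H x xJ); rewrite inE => /disjP /(_ x); apply => //; rewrite !inE eqxx.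
  by move: (H w wJ); rewrite inE => /disjP /(_ x); apply => //; rewrite !inE; apply/orP; right; apply/existsP; exists w; rewrite inE eqxx.
move=> H v vJ; rewrite inE; apply/disjP => x; rewrite !inE => /orP [/eqP ->|/existsP [w /andP [wv ewx]]].
  by apply: H; rewrite inE vJ.
by move=> xS; apply: (H x) => //; rewrite /closed_nbhd inE; apply/orP; right; apply/existsP; exists w; move: wv ewx; rewrite inE => /eqP -> ->; rewrite vJ.
Qed.

Lemma undom0 S : (undom S == set0) = dominating e S.
Proof.
apply/eqP/forallP.
  move=> H v; apply/implyP => vS.
  have : v \notin undom S by rewrite H inE.
  rewrite inE; apply: contraR => Hn.
  apply/disjP => x; rewrite /closed_nbhd !inE => /orP [/eqP ->|/existsP [w /andP [wv]]]; first by rewrite (negbTE vS).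
  move: wv; rewrite inE => /eqP -> ewx.
  by move=> xS; case/negP: Hn; apply/existsP; exists x; rewrite xS ewx.
move=> H; apply/setP => v; rewrite inE [RHS]inE; apply/negbTE.
apply/negP => /disjP Hd.
move: (H v); case: (boolP (v \in S)) => vS.
  by move=> _; apply: (Hd v) => //; rewrite !inE eqxx.
move=> /= /existsP [w /andP [wS evw]]; apply: (Hd w) => //.
by rewrite !inE; apply/orP; right; apply/existsP; exists v; rewrite inE eqxx.
Qed.

Lemma IE : DRel e p = \sum_(J : {set T}) (-1) ^+ #|J| * \prod_(v in closed_nbhd e J) (1 - p v).
Proof.
transitivity (\sum_(J : {set T}) \sum_(S : {set T}) (if [disjoint closed_nbhd e J & S] then (-1) ^+ #|J| * wt S else 0)).
  rewrite exchange_big /= /DRel [LHS]big_mkcond /=; apply: eq_bigr => S _.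
  rewrite -/(wt S).
  have -> : (if dominating e S then wt S else 0) = wt S * (undom S == set0)%:R.
    by rewrite undom0; case: ifP => _; rewrite ?mulr1 ?mulr0.
  rewrite -L2 big_distrr [LHS]big_mkcond /=; apply: eq_bigr => J _.
  by rewrite undomP; case: ifP => _; [rewrite mulrC | rewrite ?mulr0 ?mul0r].
apply: eq_bigr => J _; rewrite L1 big_distrr [RHS]big_mkcond /=; apply: eq_bigr => S _.
by rewrite disjoint_sym; case: ifP.
Qed.
End P1.
Section P2.
Variables (R : realFieldType) (T : finType) (e : rel T) (p : T -> R).

Definition FF (J : {set T}) : R := (-1) ^+ #|J| * \prod_(v in closed_nbhd e J) (1 - p v).

Lemma cn_add (a u : T) (K : {set T}) : a \in K -> e a u -> (forall w, e u w -> w = a) ->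
  closed_nbhd e (u |: K) = closed_nbhd e K.
Proof.
move=> aK eau Hu; apply/setP => x; rewrite /closed_nbhd !inE.
apply/idP/idP.
  case/orP => [/orP [/eqP ->|xK]|/existsP [w /andP [wK ewx]]].
  - by apply/orP; right; apply/existsP; exists a; rewrite aK eau.
  - by rewrite xK.
  - move: wK; rewrite !inE => /orP [/eqP wu|wK].
      by move: ewx; rewrite wu => /Hu ->; rewrite aK.
    by apply/orP; right; apply/existsP; exists w; rewrite wK ewx.
case/orP => [xK|/existsP [w /andP [wK ewx]]]; first by rewrite xK orbT.
by apply/orP; right; apply/existsP; exists w; rewrite inE wK orbT ewx.
Qed.

Lemma FF_add (a u : T) (K : {set T}) : u \notin K -> a \in K -> e a u -> (forall w, e u w -> w = a) ->
  FF (u |: K) = - FF K.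
Proof.
move=> uK aK eau Hu; rewrite /FF (cn_add aK eau Hu) cardsU1 uK /= add1n exprS mulN1r mulNr.
by [].
Qed.

Lemma leaf_unique (u a : T) : deg e u = 1%N -> e u a -> forall w, e u w -> w = a.
Proof.
move=> /eqP /cards1P [x Hx] eua w euw.
have : a \in nbhd e u by rewrite inE.
have : w \in nbhd e u by rewrite inE.
by rewrite Hx !inE => /eqP -> /eqP ->.
Qed.

Definition tog (u : T) (J : {set T}) := if u \in J then J :\ u else u |: J.

Lemma togK u J : tog u (tog u J) = J.
Proof.
rewrite /tog; case uJ: (u \in J).
  by rewrite !inE eqxx /= setD1K.
by rewrite !inE eqxx /= setU1K // uJ.
Qed.

Lemma tog_A (A : {set T}) u J : u \notin A -> tog u J :&: A = J :&: A.
Proof.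
move=> uA; rewrite /tog; case: ifP => _; apply/setP => x; rewrite !inE;
  by case: eqP => // ->; rewrite (negbTE uA) !andbF.
Qed.

Lemma FF_tog (a u : T) (J : {set T}) : a \in J -> a != u -> e a u -> (forall w, e u w -> w = a) ->
  FF (tog u J) = - FF J.
Proof.
move=> aJ au eau Hu; rewrite /tog; case: ifP => uJ.
  have aK : a \in J :\ u by rewrite !inE au aJ.
  by rewrite -{2}(setD1K uJ) (FF_add _ aK eau Hu) ?opprK // !inE eqxx.
by rewrite (FF_add _ aJ eau Hu) // uJ.
Qed.

Definition leaf (a : T) := [pick u | e a u && (deg e u == 1%N)].

Definition sig (A : {set T}) (J : {set T}) :=
  if [pick a in J :&: A] is Some a then (if leaf a is Some u then tog u J else J) else J.

Lemma main_cancel (e_sym : symmetric e) (e_irr : irreflexive e)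
    (no_isolated_edge : forall u v : T, e u v -> ~ (deg e u = 1%N /\ deg e v = 1%N))
    (A : {set T})
    (hA : forall a, a \in A -> exists u, e a u /\ deg e u = 1%N) :
  \sum_(J : {set T}) FF J = \sum_(J : {set T} | J \subset ~: A) FF J.
Proof.
have notA : forall a u, e a u -> deg e u = 1%N -> u \notin A.
  move=> a u eau du; apply/negP => uA; have [w [euw dw]] := hA u uA.
  have eua : e u a by rewrite e_sym.
  move: dw; rewrite (leaf_unique du eua euw) => da.
  by apply: (no_isolated_edge a u).
have leafP : forall a u, leaf a = Some u -> [/\ e a u, deg e u = 1%N & u \notin A].
  move=> a u; rewrite /leaf; case: pickP => // x /andP [eax /eqP dx] [<-].
  by split => //; apply: (notA a).
have sigA : forall J, sig A J :&: A = J :&: A.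
  move=> J; rewrite /sig; case: [pick a in J :&: A] => // a.
  by case Hl: (leaf a) => [u|] //; case: (leafP _ _ Hl) => _ _ uA; rewrite tog_A.
have sigK : forall J, sig A (sig A J) = J.
  move=> J; rewrite {2}/sig; case Hp: [pick a in J :&: A] => [a|]; last by rewrite /sig Hp.
  case Hl: (leaf a) => [u|]; last by rewrite /sig Hp Hl.
  case: (leafP _ _ Hl) => _ _ uA.
  by rewrite /sig tog_A // Hp Hl togK.
have PE : forall J : {set T}, (J \subset ~: A) = (J :&: A == set0).
  by move=> J; rewrite -disjoints_subset setI_eq0.
rewrite (bigID (fun J : {set T} => J \subset ~: A)) /=.
set S2 := (X in _ + X).
suff -> : S2 = 0 by rewrite addr0.
have : S2 = - S2.
  rewrite {1}/S2 (reindex_inj (can_inj sigK)) /= -sumrN; apply: eq_big => J.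
    by rewrite !PE sigA.
  rewrite PE sigA => /set0Pn [a0 Ha0].
  rewrite /sig; case: pickP => [a|]; last by move=> /(_ a0) /=; rewrite Ha0.
  rewrite inE => /andP [aJ aA].
  case Hl: (leaf a) => [u|]; last first.
    have [u [eau du]] := hA a aA.
    by move: Hl; rewrite /leaf; case: pickP => // /(_ u); rewrite eau du eqxx.
  case: (leafP _ _ Hl) => eau du _.
  apply: (FF_tog aJ) => //.
    by apply/eqP => au; move: eau; rewrite au e_irr.
  by apply: leaf_unique => //; rewrite e_sym.
move=> H; lra.
Qed.
End P2.

Theorem corollary3 (R : realFieldType) (T : finType) (e : rel T)
    (e_sym : symmetric e) (e_irr : irreflexive e)
    (no_isolated_vertex : forall v : T, (0 < deg e v)%N)
    (no_isolated_edge : forall u v : T, e u v -> ~ (deg e u = 1%N /\ deg e v = 1%N))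
    (p : T -> R) (p_ge0 : forall v, 0 <= p v) (p_le1 : forall v, p v <= 1)
    (A : {set T})
    (hA : forall a, a \in A -> exists u, e a u /\ deg e u = 1%N) :
  DRel e p =
    \sum_(J : {set T} | J \subset ~: A)
       (-1) ^+ #|J| * \prod_(v in closed_nbhd e J) (1 - p v).
Proof.
rewrite IE.
exact: (main_cancel p e_sym e_irr no_isolated_edge hA).
Qed.
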